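(* Let $a,b,\epsilon>0$ and let $n,U,d,m$ be positive integers. Let $X\in\mathbb{R}^{n\times U\times d}$ satisfy $\|X_{i,u,\cdot}\|_2\le b$ for all $i\in\{1,\dots,n\}$, $u\in\{1,\dots,U\}$, and let $M\in\mathbb{R}^{d\times m}$ be any fixed matrix. Then $$\log\mathcal{N}\Big(\{XA:\ A\in\mathbb{R}^{d\times m},\ \|A-M\|_{2,1}\le a\},\ \epsilon,\ \|\cdot\|_{*}\Big)\ \le\ \frac{64a^2b^2}{\epsilon^2}\log_2\!\Big[\Big(\frac{8ab}{\epsilon}+7\Big)mnU\Big],$$ where for $Y\in\mathbb{R}^{n\times U\times m}$, $\|Y\|_*=\max_{i\le n}\max_{u\le U}\big(\sum_{k=1}^m Y_{i,u,k}^2\big)^{1/2}$.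
   Context: For $X\in\mathbb{R}^{n\times U\times d}$ and $A\in\mathbb{R}^{d\times m}$, $XA\in\mathbb{R}^{n\times U\times m}$ is defined by $(XA)_{i,u,j}=\sum_{o=1}^d X_{i,u,o}A_{o,j}$. For $B\in\mathbb{R}^{d\times m}$, $\|B\|_{2,1}=\sum_{j=1}^m\|B_{\cdot,j}\|_2$ (sum over the $m$ columns/output channels of their Euclidean norms). For a subset $V$ of a normed space $(\mathbb{R}^N,\|\cdot\|)$, the covering number $\mathcal{N}(V,\epsilon,\|\cdot\|)$ is the minimum cardinality $k$ of a collection $v^1,\dots,v^k\in\mathbb{R}^N$ with $\sup_{v\in V}\min_j\|v-v^j\|\le\epsilon$. $\log$ denotes the natural logarithm. *)

(* Defs.v *)
(* classical reals. Indices are 0-based: i < n, u < U, o < d, j < m. *)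
From Stdlib Require Import Reals List.
Import ListNotations.
Open Scope R_scope.

Definition sumR (N : nat) (f : nat -> R) : R :=
  fold_right Rplus 0 (map f (seq 0 N)).

(* Finite max over indices 0..N-1 of nonnegative quantities (0 if N = 0) *)
Definition maxR (N : nat) (f : nat -> R) : R :=
  fold_right Rmax 0 (map f (seq 0 N)).

Definition tensor3 := nat -> nat -> nat -> R.
Definition mat := nat -> nat -> R.

Definition tmul (d : nat) (X : tensor3) (A : mat) : tensor3 :=
  fun i u j => sumR d (fun o => X i u o * A o j).

Definition mat_sub (A B : mat) : mat := fun o j => A o j - B o j.
Definition t3_sub (Y Z : tensor3) : tensor3 := fun i u k => Y i u k - Z i u k.

Definition norm21 (d m : nat) (B : mat) : R :=
  sumR m (fun j => sqrt (sumR d (fun o => (B o j)^2))).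

Definition norm_star (n U m : nat) (Y : tensor3) : R :=
  maxR n (fun i => maxR U (fun u => sqrt (sumR m (fun k => (Y i u k)^2)))).

Definition has_cover (n U m : nat) (V : tensor3 -> Prop) (eps : R) (k : nat) : Prop :=
  exists cs : list tensor3, length cs = k /\
    forall Y, V Y -> exists c, In c cs /\ norm_star n U m (t3_sub Y c) <= eps.

Definition is_covering_number (n U m : nat) (V : tensor3 -> Prop) (eps : R) (N : nat) : Prop :=
  has_cover n U m V eps N /\ forall k, has_cover n U m V eps k -> (N <= k)%nat.

Definition log2 (x : R) : R := ln x / ln 2.

Definition linclass (d m : nat) (X : tensor3) (M : mat) (a : R) : tensor3 -> Prop :=
  fun Y => exists A : mat, norm21 d m (mat_sub A M) <= a /\ Y = tmul d X A.

(* Main.v *)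
Require Import Defs.
From Stdlib Require Import Reals List Lra Lia Psatz Classical ZArith.
Import ListNotations.
Open Scope R_scope.

Lemma fold_plus_shift l z : fold_right Rplus z l = fold_right Rplus 0 l + z.
Proof. induction l; simpl; [lra| rewrite IHl; lra]. Qed.

Lemma sumR_S N f : sumR (S N) f = sumR N f + f N.
Proof. unfold sumR. rewrite seq_S, map_app, fold_right_app. simpl. rewrite fold_plus_shift. lra. Qed.

Lemma sumR_ext N f g : (forall k, (k < N)%nat -> f k = g k) -> sumR N f = sumR N g.
Proof. induction N; intros H; [reflexivity|]. rewrite !sumR_S, IHN by (intros; apply H; lia). rewrite H by lia. reflexivity. Qed.

Lemma sumR_le N f g : (forall k, (k < N)%nat -> f k <= g k) -> sumR N f <= sumR N g.
Proof. induction N; intros H; [unfold sumR; simpl; lra|]. rewrite !sumR_S.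
  assert (f N <= g N) by (apply H; lia). assert (sumR N f <= sumR N g) by (apply IHN; intros; apply H; lia). lra. Qed.

Lemma sumR_plus N f g : sumR N (fun k => f k + g k) = sumR N f + sumR N g.
Proof. induction N; [unfold sumR; simpl; lra|]. rewrite !sumR_S, IHN. lra. Qed.

Lemma sumR_scal N c f : sumR N (fun k => c * f k) = c * sumR N f.
Proof. induction N; [unfold sumR; simpl; lra|]. rewrite !sumR_S, IHN. lra. Qed.

Lemma sumR_const N c : sumR N (fun _ => c) = INR N * c.
Proof. induction N; [unfold sumR; simpl; lra|]. rewrite !sumR_S, IHN, S_INR. lra. Qed.

Lemma sumR_minus N f g : sumR N (fun k => f k - g k) = sumR N f - sumR N g.
Proof. induction N; [unfold sumR; simpl; lra|]. rewrite !sumR_S, IHN. lra. Qed.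

Lemma sumR_nonneg N f : (forall k, (k < N)%nat -> 0 <= f k) -> 0 <= sumR N f.
Proof. intros H. replace 0 with (sumR N (fun _ => 0)). apply sumR_le; auto.
  rewrite sumR_const; lra. Qed.

Lemma sumR_single N k v : (k < N)%nat -> sumR N (fun j => if Nat.eq_dec j k then v else 0) = v.
Proof. induction N; intros Hk; [lia|]. rewrite sumR_S. destruct (Nat.eq_dec N k).
  - subst. rewrite (sumR_ext _ _ (fun _ => 0)). rewrite sumR_const; lra.
    intros j Hj. destruct (Nat.eq_dec j k); [lia|reflexivity].
  - rewrite IHN by lia. lra. Qed.

Lemma sumR_ge_term N f k : (forall j, (j < N)%nat -> 0 <= f j) -> (k < N)%nat -> f k <= sumR N f.
Proof. intros H Hk. rewrite <- (sumR_single N k (f k)) by auto. apply sumR_le.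
  intros j Hj. destruct (Nat.eq_dec j k); [subst; lra| apply H; auto]. Qed.

Lemma fold_max_le l e : 0 <= e -> (forall x, In x l -> x <= e) -> fold_right Rmax 0 l <= e.
Proof. induction l; simpl; intros He H; auto. apply Rmax_lub; auto. Qed.

Lemma maxR_le N f e : 0 <= e -> (forall i, (i < N)%nat -> f i <= e) -> maxR N f <= e.
Proof. intros He H. unfold maxR. apply fold_max_le; auto. intros x Hx.
  apply in_map_iff in Hx as [i [<- Hi]]. apply in_seq in Hi. apply H; lia. Qed.

Lemma tmul_sub d X A C i u k : tmul d X A i u k - tmul d X C i u k = sumR d (fun o => X i u o * (A o k - C o k)).
Proof. unfold tmul. rewrite <- sumR_minus. apply sumR_ext; intros; ring. Qed.

Lemma ln_le x y : 0 < x -> x <= y -> ln x <= ln y.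
Proof. intros Hx Hxy. destruct (Req_dec x y). subst; lra. left; apply ln_increasing; lra. Qed.

Lemma min_exists (P : nat -> Prop) n : P n -> exists N, P N /\ forall k, P k -> (N <= k)%nat.
Proof. intros Hn. destruct (classic (exists N, P N /\ forall k, P k -> (N<=k)%nat)) as [H|H]; auto. exfalso.
  assert (H0 : forall j k, (k <= j)%nat -> ~ P k).
  { induction j; intros k Hk Pk.
    - assert (k = 0%nat) by lia; subst. apply H. exists 0%nat. split; auto; lia.
    - destruct (Nat.eq_dec k (S j)).
      + subst. apply H. exists (S j). split; auto. intros k' Pk'. destruct (le_lt_dec (S j) k'); auto.
        exfalso. apply (IHj k'); [lia|auto].
      + apply (IHj k); [lia|auto]. }
  apply (H0 n n); auto. Qed.

Definition Phi d m (om : nat -> R) (E : mat) : R :=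
  sumR m (fun k => sumR d (fun o => (E o k)^2) / om k).
Definition stepmat (X : tensor3) i u k (c : R) : mat :=
  fun o k' => if Nat.eq_dec k' k then c * X i u o else 0.
Definition madd (C D : mat) : mat := fun o k => C o k + D o k.

Fixpoint Lk (C0 : mat) (st : list mat) (k : nat) : list mat :=
  match k with
  | O => [C0]
  | S k' => Lk C0 st k' ++ flat_map (fun c => map (fun s => madd c s) st) (Lk C0 st k')
  end.

Lemma Lk_length C0 st k : length (Lk C0 st k) = ((1 + length st) ^ k)%nat.
Proof. induction k; simpl; auto. rewrite length_app, (flat_map_constant_length (c := length st)).
  rewrite IHk. simpl. lia. intros; apply length_map. Qed.

Lemma Lk_mono C0 st j j' c : In c (Lk C0 st j) -> (j <= j')%nat -> In c (Lk C0 st j').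
Proof. intros H Hj. induction Hj; auto. simpl. apply in_or_app; left; auto. Qed.

Lemma run (P : mat -> R) (D : mat -> Prop) st C0 delta :
  0 < delta -> (forall C, 0 <= P C) ->
  (forall C, ~ D C -> exists s, In s st /\ P (madd C s) <= P C - delta) ->
  forall K j C, In C (Lk C0 st j) -> P C < delta * (INR K + 1) ->
  exists c, In c (Lk C0 st (j + K)) /\ D c.
Proof. intros Hd Hnn Hst. induction K; intros j C HC HP.
  - destruct (classic (D C)) as [HD|HD].
    + exists C; split; auto. rewrite Nat.add_0_r; auto.
    + destruct (Hst C HD) as [s [Hs HPs]]. specialize (Hnn (madd C s)). simpl in HP. lra.
  - destruct (classic (D C)) as [HD|HD].
    + exists C; split; auto. apply (Lk_mono _ _ j); auto; lia.
    + destruct (Hst C HD) as [s [Hs HPs]].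
      destruct (IHK (S j) (madd C s)) as [c [Hc Dc]].
      * simpl. apply in_or_app; right. apply in_flat_map. exists C; split; auto. apply in_map; auto.
      * rewrite S_INR in HP. lra.
      * exists c; split; auto. replace (j + S K)%nat with (S j + K)%nat by lia. auto. Qed.

Lemma Phi_step d m om (A C0 : mat) X i u k c : (k < m)%nat ->
  Phi d m om (mat_sub A (madd C0 (stepmat X i u k c))) =
  Phi d m om (mat_sub A C0) +
  (-2 * c * sumR d (fun o => X i u o * mat_sub A C0 o k) + c^2 * sumR d (fun o => (X i u o)^2)) / om k.
Proof. intros Hk. unfold Phi.
  transitivity (sumR m (fun k' => sumR d (fun o => (mat_sub A C0 o k')^2)/om k' +
     (if Nat.eq_dec k' k then (-2 * c * sumR d (fun o => X i u o * mat_sub A C0 o k) + c^2 * sumR d (fun o => (X i u o)^2)) / om k else 0))).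
  - apply sumR_ext; intros k' _. destruct (Nat.eq_dec k' k) as [e|ne].
    + subst k'. rewrite (sumR_ext _ _ (fun o => ((mat_sub A C0 o k)^2 + (-2*c) * (X i u o * mat_sub A C0 o k)) + c^2 * (X i u o)^2)).
      * rewrite !sumR_plus, !sumR_scal. unfold Rdiv; ring.
      * intros o _. unfold mat_sub, madd, stepmat. destruct (Nat.eq_dec k k); [|congruence]. ring.
    + rewrite (sumR_ext _ _ (fun o => (mat_sub A C0 o k')^2)). ring.
      intros o _. unfold mat_sub, madd, stepmat. destruct (Nat.eq_dec k' k); [congruence|]. f_equal; ring.
  - rewrite sumR_plus, sumR_single; auto. Qed.

Lemma dec_lemma g w xx b e th : 0 < w -> 0 < b -> 0 < e -> th * (2 * b^2) = e ->
  0 <= xx <= b^2 -> g^2 > w * e^2 / 2 ->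
  exists c, (c = th * sqrt w \/ c = - (th * sqrt w)) /\
    (-2 * c * g + c^2 * xx) / w <= - (th * e / 2).
Proof. intros Hw Hb He Hth Hxx Hg.
  assert (Hr : 0 < sqrt w) by (apply sqrt_lt_R0; auto).
  assert (Hr2 : sqrt w * sqrt w = w) by (apply sqrt_sqrt; lra).
  set (r := sqrt w) in *.
  assert (Hth0 : 0 < th) by nra.
  assert (Hdiv : forall N, N <= -(th * e / 2) * w -> N / w <= -(th * e / 2)).
  { intros N HN. apply (Rmult_le_reg_r w); auto. unfold Rdiv. rewrite Rmult_assoc, Rinv_l, Rmult_1_r; lra. }
  assert (Hx2 : th * th * w * xx <= th * w * (e / 2)).
  { assert (th * th * w * xx <= th * th * w * b^2). { apply Rmult_le_compat_l; [|lra]. nra. } nra. }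
  destruct (Rle_lt_dec 0 g) as [Hg0|Hg0].
  - exists (th * r). split; [left; reflexivity|]. apply Hdiv.
    assert (r * e / 2 < g).
    { destruct (Rle_lt_dec g (r * e / 2)) as [H|H]; auto. exfalso.
      assert (g * g <= (r * e / 2) * (r * e / 2)) by (apply Rmult_le_compat; lra). nra. }
    assert (th * r * (r * e / 2) < th * r * g) by (apply Rmult_lt_compat_l; nra).
    nra.
  - exists (- (th * r)). split; [right; reflexivity|]. apply Hdiv.
    assert (g < - (r * e / 2)).
    { destruct (Rle_lt_dec (- (r * e / 2)) g) as [H|H]; auto. exfalso.
      assert ((-g) * (-g) <= (r * e / 2) * (r * e / 2)) by (apply Rmult_le_compat; lra). nra. }
    assert (th * r * (r * e / 2) < th * r * (-g)) by (apply Rmult_lt_compat_l; nra).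
    nra.
Qed.

Definition coefs th m : list R :=
  flat_map (fun l => [th * sqrt (INR l / INR m); - (th * sqrt (INR l / INR m))]) (seq 1 (S m)).
Definition steps (X : tensor3) n U m th : list mat :=
  flat_map (fun i => flat_map (fun u => flat_map (fun k =>
     map (fun c => stepmat X i u k c) (coefs th m)) (seq 0 m)) (seq 0 U)) (seq 0 n).

Lemma steps_length X n U m th : length (steps X n U m th) = (n * (U * (m * (S m * 2))))%nat.
Proof. unfold steps.
  rewrite (flat_map_constant_length (c := (U * (m * (S m * 2)))%nat)); [rewrite length_seq; auto|].
  intros i _. rewrite (flat_map_constant_length (c := (m * (S m * 2))%nat)); [rewrite length_seq; auto|].
  intros u _. rewrite (flat_map_constant_length (c := (S m * 2)%nat)); [rewrite length_seq; auto|].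
  intros k _. rewrite length_map. unfold coefs.
  rewrite (flat_map_constant_length (c := 2%nat)); [rewrite length_seq; auto|]. intros; reflexivity. Qed.

Lemma steps_in X n U m th i u k l c : (i < n)%nat -> (u < U)%nat -> (k < m)%nat -> (1 <= l <= S m)%nat ->
  (c = th * sqrt (INR l / INR m) \/ c = - (th * sqrt (INR l / INR m))) ->
  In (stepmat X i u k c) (steps X n U m th).
Proof. intros Hi Hu Hk Hl Hc. unfold steps.
  apply in_flat_map. exists i. split; [apply in_seq; lia|].
  apply in_flat_map. exists u. split; [apply in_seq; lia|].
  apply in_flat_map. exists k. split; [apply in_seq; lia|].
  apply in_map. unfold coefs. apply in_flat_map. exists l. split; [apply in_seq; lia|].
  destruct Hc as [->| ->]; simpl; auto. Qed.

Lemma om_facts m a w : (0 < m)%nat -> 0 < a -> 0 <= w <= a ->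
  let o := IZR (up (INR m * w / a)) / INR m in
  0 < o /\ w <= a * o /\ o <= w / a + / INR m /\
  exists l, (1 <= l <= S m)%nat /\ o = INR l / INR m.
Proof. intros Hm Ha Hw o.
  assert (HmR : 0 < INR m) by (apply lt_0_INR; auto).
  set (y := INR m * w / a) in *.
  assert (Hy : y * a = INR m * w) by (unfold y; field; lra).
  set (z := up y) in *. destruct (archimed y) as [H1 H2]. fold z in H1, H2.
  assert (Ho : o * INR m = IZR z) by (unfold o; field; lra).
  assert (Hy0 : 0 <= y) by nra.
  assert (Hym : y <= INR m) by nra.
  assert (Hz : (0 < z)%Z) by (apply lt_IZR; lra).
  split; [nra|]. split; [nra|]. split.
  { assert (o * INR m <= y + 1) by lra.
    replace o with ((o * INR m) * / INR m) by (field; lra).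
    apply Rle_trans with ((y + 1) * / INR m).
    { apply Rmult_le_compat_r; [left; apply Rinv_0_lt_compat; lra| lra]. }
    right. unfold y. field. lra. }
  exists (Z.to_nat z). assert (HI : INR (Z.to_nat z) = IZR z).
  { rewrite INR_IZR_INZ, Z2Nat.id. reflexivity. lia. }
  split; [split|].
  - lia.
  - apply INR_le. rewrite HI, S_INR. lra.
  - rewrite HI. unfold o; reflexivity. Qed.

Lemma not_done_ex (n U : nat) (F : nat -> nat -> R) e :
  ~ (forall i u, (i < n)%nat -> (u < U)%nat -> F i u <= e) ->
  exists i u, (i < n)%nat /\ (u < U)%nat /\ e < F i u.
Proof. intros H. apply NNPP. intros H'. apply H. intros i u Hi Hu.
  destruct (Rle_lt_dec (F i u) e); auto. exfalso. apply H'. exists i, u. auto. Qed.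

Lemma sqrt_gt_sq G e : 0 < e -> e < sqrt G -> e^2 < G.
Proof. intros He H. destruct (Rle_lt_dec G (e^2)) as [H1|H1]; auto. exfalso.
  assert (sqrt G <= sqrt (e^2)) by (apply sqrt_le_1_alt; auto).
  rewrite sqrt_pow2 in H0 by lra. lra. Qed.

Lemma sq_le_of_sqrt S b : 0 <= S -> sqrt S <= b -> S <= b^2.
Proof. intros HS H. assert (0 <= sqrt S) by apply sqrt_pos.
  rewrite <- (sqrt_sqrt S HS). simpl. nra. Qed.

Theorem cover_exists (a b eps : R) (n U d m : nat) (X : tensor3) (M : mat) :
  0 < a -> 0 < b -> 0 < eps -> (0 < m)%nat ->
  (forall i u, (i < n)%nat -> (u < U)%nat -> sqrt (sumR d (fun o => (X i u o)^2)) <= b) ->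
  forall K, a^2 < eps * eps / (4 * b^2) * (INR K + 1) ->
  has_cover n U m (linclass d m X M a) eps
     (length (map (tmul d X) (Lk M (steps X n U m (eps / (2 * b^2))) K))).
Proof.
  intros Ha Hb He Hm HX K HK.
  set (th := eps / (2 * b^2)).
  assert (Hth : th * (2 * b^2) = eps) by (unfold th; field; lra).
  set (delta := th * eps / 2).
  assert (Hdelta : delta = eps * eps / (4 * b^2)) by (unfold delta, th; field; lra).
  set (st := steps X n U m th).
  exists (map (tmul d X) (Lk M st K)). split; [reflexivity|].
  intros Y [A [HA ->]].
  set (w := fun k => sqrt (sumR d (fun o => (mat_sub A M o k)^2))).
  assert (Hw0 : forall k, 0 <= w k) by (intros; apply sqrt_pos).
  assert (Hsw : sumR m w <= a) by exact HA.
  assert (Hwa : forall k, (k < m)%nat -> w k <= a).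
  { intros k Hk. apply Rle_trans with (sumR m w); auto. apply sumR_ge_term; auto. }
  set (om := fun k => IZR (up (INR m * w k / a)) / INR m).
  assert (Hom : forall k, (k < m)%nat -> 0 < om k /\ w k <= a * om k /\ om k <= w k / a + / INR m /\
     exists l, (1 <= l <= S m)%nat /\ om k = INR l / INR m).
  { intros k Hk. apply om_facts; auto. }
  assert (HmR : 0 < INR m) by (apply lt_0_INR; auto).
  assert (Homsum : sumR m om <= 2).
  { apply Rle_trans with (sumR m (fun k => / a * w k + / INR m)).
    - apply sumR_le. intros k Hk. destruct (Hom k Hk) as [_ [_ [H _]]]. unfold Rdiv in H. lra.
    - rewrite sumR_plus, sumR_scal, sumR_const.
      assert (/ a * sumR m w <= 1).
      { apply Rle_trans with (/ a * a). apply Rmult_le_compat_l; auto. left; apply Rinv_0_lt_compat; lra.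
        right; field; lra. }
      assert (INR m * / INR m = 1) by (field; lra). lra. }
  set (P := fun C => Phi d m om (mat_sub A C)).
  set (D := fun C : mat => forall i u, (i < n)%nat -> (u < U)%nat ->
        sqrt (sumR m (fun k => (sumR d (fun o => X i u o * (A o k - C o k)))^2)) <= eps).
  assert (HPnn : forall C, 0 <= P C).
  { intros C. unfold P, Phi. apply sumR_nonneg. intros k Hk. destruct (Hom k Hk) as [Ho _].
    unfold Rdiv. apply Rmult_le_pos. apply sumR_nonneg; intros; apply pow2_ge_0.
    left; apply Rinv_0_lt_compat; auto. }
  assert (HP0 : P M <= a^2).
  { unfold P, Phi. apply Rle_trans with (sumR m (fun k => a * w k)).
    - apply sumR_le. intros k Hk. destruct (Hom k Hk) as [Ho [Hwo _]].
      assert (Hs : sumR d (fun o => (mat_sub A M o k)^2) = w k * w k).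
      { unfold w. rewrite sqrt_sqrt; auto. apply sumR_nonneg; intros; apply pow2_ge_0. }
      rewrite Hs. specialize (Hw0 k).
      apply (Rmult_le_reg_r (om k)); auto. unfold Rdiv. rewrite Rmult_assoc, Rinv_l, Rmult_1_r by lra. nra.
    - rewrite sumR_scal. simpl. nra. }
  assert (Hstep : forall C, ~ D C -> exists s, In s st /\ P (madd C s) <= P C - delta).
  { intros C HC. apply not_done_ex in HC as [i [u [Hi [Hu HG]]]].
    apply sqrt_gt_sq in HG; auto.
    set (g := fun k => sumR d (fun o => X i u o * (A o k - C o k))) in *.
    assert (Hk : exists k, (k < m)%nat /\ g k ^ 2 > om k * eps^2 / 2).
    { apply NNPP. intros Hno. 
      assert (Hs : sumR m (fun k => g k ^2) <= sumR m (fun k => eps^2/2 * om k)).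
      { apply sumR_le. intros k Hk. destruct (Rle_lt_dec (g k ^2) (om k * eps^2/2)) as [H|H].
        lra. exfalso. apply Hno. exists k. split; auto. }
      rewrite sumR_scal in Hs. assert (0 < eps^2) by nra.
      assert (eps^2/2 * sumR m om <= eps^2/2 * 2) by (apply Rmult_le_compat_l; lra).
      assert (HG' : eps^2 < sumR m (fun k => g k ^2)) by exact HG. lra. }
    destruct Hk as [k [Hk Hgk]].
    destruct (Hom k Hk) as [Ho [_ [_ [l [Hl Hol]]]]].
    set (xx := sumR d (fun o => (X i u o)^2)).
    assert (Hxx : 0 <= xx <= b^2).
    { split. apply sumR_nonneg; intros; apply pow2_ge_0. apply sq_le_of_sqrt.
      apply sumR_nonneg; intros; apply pow2_ge_0. apply HX; auto. }
    destruct (dec_lemma (g k) (om k) xx b eps th Ho Hb He Hth Hxx Hgk) as [c [Hc Hdec]].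
    exists (stepmat X i u k c). split.
    - apply (steps_in X n U m th i u k l c); auto. rewrite <- Hol. auto.
    - unfold P. rewrite Phi_step by auto. fold xx. unfold delta.
      assert (sumR d (fun o => X i u o * mat_sub A C o k) = g k) by reflexivity.
      rewrite H. lra. }
  assert (HdP : 0 < delta) by (rewrite Hdelta; apply Rdiv_lt_0_compat; nra).
  destruct (run P D st M delta HdP HPnn Hstep K 0 M) as [c [Hc Dc]].
  - simpl; auto.
  - rewrite Hdelta. lra.
  - exists (tmul d X c). split. apply in_map. simpl in Hc. auto.
    unfold norm_star. apply maxR_le; [lra|]. intros i Hi. apply maxR_le; [lra|]. intros u Hu.
    rewrite (sumR_ext m _ (fun k => (sumR d (fun o => X i u o * (A o k - c o k)))^2)).
    apply Dc; auto. intros k _. unfold t3_sub. rewrite tmul_sub. reflexivity.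
Qed.

Theorem mainTheorem2 (a b eps : R) (n U d m : nat) (X : tensor3) (M : mat) :
  0 < a -> 0 < b -> 0 < eps ->
  (0 < n)%nat -> (0 < U)%nat -> (0 < d)%nat -> (0 < m)%nat ->
  (forall i u, (i < n)%nat -> (u < U)%nat ->
     sqrt (sumR d (fun o => (X i u o)^2)) <= b) ->
  exists N : nat,
    is_covering_number n U m (linclass d m X M a) eps N /\
    ln (INR N) <= 64 * a^2 * b^2 / eps^2 *
                  log2 ((8 * a * b / eps + 7) * INR m * INR n * INR U).
Proof.
  intros Ha Hb He Hn HU Hd Hm HX.
  set (T := a^2 * b^2 / eps^2).
  assert (HT : 0 <= T) by (unfold T; apply Rmult_le_pos; [nra| left; apply Rinv_0_lt_compat; nra]).
  set (y := 4 * T).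
  set (z := up y). destruct (archimed y) as [Hz1 Hz2]. fold z in Hz1, Hz2.
  assert (Hz : (1 <= z)%Z) by (apply le_IZR; assert (0 < IZR z) by (unfold y in *; lra);
     apply Rnot_lt_le; intros Hc; assert (Hz0 : (0 < z)%Z) by (apply lt_IZR; lra);
     apply lt_IZR in Hc; lia).
  set (K := Z.to_nat (z - 1)).
  assert (HKR : INR K = IZR z - 1).
  { unfold K. rewrite INR_IZR_INZ, Z2Nat.id by lia. rewrite minus_IZR. reflexivity. }
  assert (HK : a^2 < eps * eps / (4 * b^2) * (INR K + 1)).
  { rewrite HKR. set (q := eps * eps / (4 * b^2)).
    assert (Hq : 0 < q) by (unfold q; apply Rdiv_lt_0_compat; nra).
    assert (Hyq : y * q = a^2) by (unfold y, q, T; field; lra).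
    assert (q * y < q * (IZR z - 1 + 1)) by (apply Rmult_lt_compat_l; lra). lra. }
  pose proof (cover_exists a b eps n U d m X M Ha Hb He Hm HX K HK) as Hcov.
  rewrite length_map, Lk_length, steps_length in Hcov.
  set (S := (n * (U * (m * (Datatypes.S m * 2))))%nat) in *.
  destruct (min_exists _ _ Hcov) as [N [HN Hmin]].
  exists N. split; [split; auto|].
  assert (HNpos : (1 <= N)%nat).
  { destruct N; [|lia]. exfalso. destruct HN as [cs [Hl Hc]].
    destruct cs; [|simpl in Hl; lia].
    destruct (Hc (tmul d X M)) as [c [Hin _]]; [|destruct Hin].
    exists M. split; auto. unfold norm21.
    rewrite (sumR_ext m _ (fun _ => 0)). rewrite sumR_const; lra.
    intros j _. rewrite (sumR_ext d _ (fun _ => 0)). rewrite sumR_const, Rmult_0_r. apply sqrt_0.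
    intros o _. unfold mat_sub. simpl. ring. }
  assert (HNle : (N <= (1 + S) ^ K)%nat) by (apply Hmin; auto).
  set (Z := (8 * a * b / eps + 7) * INR m * INR n * INR U).
  assert (HmR : 1 <= INR m) by (apply (le_INR 1); lia).
  assert (HnR : 1 <= INR n) by (apply (le_INR 1); lia).
  assert (HUR : 1 <= INR U) by (apply (le_INR 1); lia).
  assert (Hab : 0 <= 8 * a * b / eps) by (apply Rmult_le_pos; [nra| left; apply Rinv_0_lt_compat; lra]).
  assert (HZ7 : 7 * INR m * INR n * INR U <= Z).
  { unfold Z. apply Rmult_le_compat_r; [lra|]. apply Rmult_le_compat_r; [lra|].
    apply Rmult_le_compat_r; lra. }
  assert (Hmn : 1 <= INR m * INR n) by nra.
  assert (Hmnu : 1 <= INR m * INR n * INR U) by nra.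
  assert (HZ1 : 1 <= Z).
  { assert (7 * INR m * INR n * INR U = 7 * (INR m * INR n * INR U)) by ring. lra. }
  assert (HlnZ : 0 <= ln Z) by (rewrite <- ln_1; apply ln_le; lra).
  assert (HS : (1 + S <= (7 * m * n * U) ^ 2)%nat).
  { unfold S. set (p := (m * n * U)%nat).
    assert (Hp : (1 <= p)%nat) by (unfold p; nia).
    assert (H1 : (n * (U * (m * (Datatypes.S m * 2))) <= 4 * (m * m * (n * U)))%nat) by nia.
    assert (H2 : (n * U <= (n * U) * (n * U))%nat) by nia.
    assert (H3 : (m * m * (n * U) <= p * p)%nat) by (unfold p; nia).
    replace ((7 * m * n * U) ^ 2)%nat with (49 * (p * p))%nat by (unfold p; simpl; ring).
    lia. }
  assert (HSR : 0 < INR (1 + S)) by (apply lt_0_INR; lia).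
  assert (HlnS : ln (INR (1 + S)) <= 2 * ln Z).
  { apply Rle_trans with (ln (Z ^ 2)).
    - apply ln_le; auto. apply Rle_trans with (INR ((7 * m * n * U) ^ 2)). apply le_INR; auto.
      rewrite pow_INR, !mult_INR. replace (INR 7) with 7 by (simpl; ring).
      assert (0 <= 7 * INR m * INR n * INR U) by nra. nra.
    - rewrite ln_pow by lra. simpl. lra. }
  assert (Hln1 : ln (INR N) <= INR K * ln (INR (1 + S))).
  { rewrite <- ln_pow by auto. rewrite <- pow_INR. apply ln_le.
    apply lt_0_INR; lia. apply le_INR; auto. }
  assert (HKT : INR K <= 4 * T) by (rewrite HKR; unfold y in *; lra).
  assert (HKpos : 0 <= INR K) by apply pos_INR.
  assert (Hln2a : / 2 < ln 2) by apply ln_lt_2.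
  assert (Hln2b : ln 2 < 2).
  { rewrite <- (ln_exp 2) at 2. apply ln_increasing; [lra|].
    pose proof (exp_ineq1 2). lra. }
  assert (H8 : 8 <= 64 / ln 2).
  { apply (Rmult_le_reg_r (ln 2)); [lra|]. unfold Rdiv. rewrite Rmult_assoc, Rinv_l, Rmult_1_r; lra. }
  unfold log2. fold Z.
  replace (64 * a ^ 2 * b ^ 2 / eps ^ 2 * (ln Z / ln 2)) with (64 / ln 2 * (T * ln Z))
    by (unfold T; field; lra).
  apply Rle_trans with (INR K * (2 * ln Z)).
  { apply Rle_trans with (INR K * ln (INR (1 + S))); auto. apply Rmult_le_compat_l; auto. }
  apply Rle_trans with (8 * (T * ln Z)).
  { assert (INR K * (2 * ln Z) <= 4 * T * (2 * ln Z)) by (apply Rmult_le_compat_r; lra). lra. }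
  apply Rmult_le_compat_r; auto. apply Rmult_le_pos; auto.
Qed.
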